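(* Let $\Gamma$ be a finite group, $F:\Gamma\to\Gamma$ a group automorphism, and $\mathbf{E}=\bigoplus_{w\in\Gamma}\mathbf{E}_w$ a finite-dimensional associative $\bar{\mathbb{Q}}_l$-algebra with $1$ with $\dim\mathbf{E}_w=1$, $\mathbf{E}_w\mathbf{E}_y=\mathbf{E}_{wy}$; choose basis elements $b_w\in\mathbf{E}_w$. Let $\iota:\mathbf{E}\to\mathbf{E}$ be an algebra automorphism with $\iota(\mathbf{E}_w)=\mathbf{E}_{F(w)}$ for all $w$. Let $V$ be a simple $\mathbf{E}$-module admitting a linear isomorphism $\iota_V:V\to V$ with $\iota_V(ev)=\iota(e)\iota_V(v)$ for all $e,v$. If $x\in\Gamma$ is not effective, then $\mathrm{tr}(\iota_Vb_x,V)=0$.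
   Context: For $x\in\Gamma$ let $\Gamma_x=\{y\in\Gamma: F^{-1}(y)xy^{-1}=x\}$, and define $\gamma_x:\Gamma_x\to\bar{\mathbb{Q}}_l^*$ by $\iota^{-1}(b_y)b_x=\gamma_x(y)b_xb_y$. The element $x$ is called effective if $\gamma_x(y)=1$ for all $y\in\Gamma_x$. *)

(* Defs.v *)
From HB Require Import structures.
From mathcomp Require Import all_boot all_order all_algebra all_fingroup all_field.
Set Implicit Arguments. Unset Strict Implicit. Unset Printing Implicit Defensive.
Import GRing.Theory.
Local Open Scope ring_scope.

Definition lftr (K : fieldType) (V : vectType K) (f : 'End(V)) : K :=
  \tr (passmx.mxof (vbasis {:V}) (vbasis {:V}) f).

(* x is effective: for every y in Gamma_x = {y | F^{-1}(y) x y^{-1} = x},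
   the scalar gamma_x(y) defined by  iota^{-1}(b_y) b_x = gamma_x(y) b_x b_y
   equals 1.  Here F^{-1}(y) is written as the z with F z = y, and
   iota^{-1}(b_y) as the u with iota u = b_y. *)
Definition effective (gT : finGroupType) (K : fieldType) (E : falgType K)
  (F : gT -> gT) (iota : E -> E) (b : gT -> E) (x : gT) : Prop :=
  forall y z : gT, F z = y -> (z * x * y^-1)%g = x ->
  forall u : E, iota u = b y ->
  forall c : K, u * b x = c *: (b x * b y) -> c = 1.

Definition simple_module (K : fieldType) (E : falgType K) (V : vectType K)
  (act : E -> 'End(V)) : Prop :=
  {:V}%VS != 0%VS /\
  forall U : {vspace V}, (forall e : E, (act e @: U <= U)%VS) ->
    U = 0%VS \/ U = {:V}%VS.

(* Main.v *)
Require Import Defs.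
From HB Require Import structures.
From mathcomp Require Import all_boot all_order all_algebra all_fingroup all_field.
From Stdlib Require Classical_Prop.
Import GRing.Theory.
Local Open Scope ring_scope.

Lemma ltr_comm (K : fieldType) (V : vectType K) (f g : 'End(V)) :
  lftr (f \o g)%VF = lftr (g \o f)%VF.
Proof. by rewrite /lftr !(passmx.mxof_comp _ _ (vbasisP _)) mxtrace_mulC. Qed.

Lemma ltrZ (K : fieldType) (V : vectType K) (k : K) (f : 'End(V)) :
  lftr (k *: f) = k * lftr f.
Proof. rewrite /lftr; have h := passmx.mxof_linear (vbasis {:V}) (vbasis {:V}) k f 0. have h0 := passmx.mxof_linear (vbasis {:V}) (vbasis {:V}) 1 0 0. rewrite scale1r addr0 scale1r in h0. have z : passmx.mxof (vbasis {:V}) (vbasis {:V}) 0 = 0. by apply: (addrI (passmx.mxof (vbasis {:V}) (vbasis {:V}) 0)); rewrite -h0 addr0. rewrite addr0 z addr0 in h. by rewrite h mxtraceZ. Qed.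

Theorem mainTheorem15
  (K : closedFieldType) (charK0 : [pchar K] =i pred0)
  (gT : finGroupType)
  (F : gT -> gT) (F_morph : {morph F : a c / (a * c)%g}) (F_bij : bijective F)
  (E : falgType K) (Ew : gT -> {vspace E})
  (Ew_dim : forall w, \dim (Ew w) = 1%N)
  (Ew_mul : forall w y, (Ew w * Ew y)%VS = Ew (w * y)%g)
  (Ew_sum : (\sum_(w : gT) Ew w)%VS = {:E}%VS)
  (Ew_direct : directv (\sum_(w : gT) Ew w)%VS)
  (b : gT -> E) (b_in : forall w, b w \in Ew w) (b_nz : forall w, b w != 0)
  (iota : {lrmorphism E -> E}) (iota_bij : bijective iota)
  (iota_grade : forall w, (linfun iota @: Ew w)%VS = Ew (F w))
  (V : vectType K) (act : {linear E -> 'End(V)})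
  (act1 : act 1 = \1%VF)
  (actM : forall e f, act (e * f) = (act e \o act f)%VF)
  (V_simple : simple_module act)
  (iotaV : 'End(V)) (iotaV_bij : bijective iotaV)
  (iotaV_comm : forall (e : E) (v : V), iotaV (act e v) = act (iota e) (iotaV v))
  (x : gT) :
  ~ effective F iota b x -> lftr (iotaV \o act (b x))%VF = 0.
Proof.
have Ew_line w : Ew w = <[b w]>%VS.
  apply/eqP; rewrite eq_sym eqEdim -memvE b_in Ew_dim dim_vline b_nz //.
have mul_nz w y : b w * b y != 0.
  have := Ew_mul w y; rewrite !Ew_line prodv_line => h.
  have := dim_vline (b w * b y); rewrite h dim_vline b_nz.
  by case: (_ != 0).
have mul_in w y : b w * b y \in Ew (w * y)%g by rewrite -Ew_mul memv_mul.
have one_in : (1 : E) \in Ew 1%g.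
  have := mul_in 1%g 1%g; rewrite mulg1 Ew_line => /vlineP [l hl].
  have l_nz : l != 0 by apply/eqP => l0; move: (mul_nz 1%g 1%g); by rewrite hl l0 scale0r eqxx.
  pose e := l^-1 *: b 1%g.
  have ebw w : e * b w = b w.
    have := mul_in 1%g w; rewrite mul1g Ew_line => /vlineP [m hm].
    have m_nz : m != 0 by apply/eqP => l0; move: (mul_nz 1%g w); by rewrite hm l0 scale0r eqxx.
    have : (b 1%g * b 1%g) * b w = b 1%g * (b 1%g * b w) by rewrite mulrA.
    rewrite hl hm -scalerAl -scalerAr hm !scalerA => /eqP.
    rewrite -subr_eq0 -scalerBl scaler_eq0 (negPf (b_nz w)) orbF subr_eq0.
    rewrite mulrC => /eqP /(mulfI m_nz) eq_lm.
    by rewrite /e -scalerAl hm scalerA eq_lm mulVf ?scale1r // -eq_lm.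
  have ea a : e * a = a.
    have : a \in (\sum_(w : gT) Ew w)%VS by rewrite Ew_sum memvf.
    move=> /memv_sumP [v hv ->]; rewrite mulr_sumr; apply: eq_bigr => i _.
    have := hv i isT; rewrite Ew_line => /vlineP [k ->].
    by rewrite -scalerAr ebw.
  have <- : e = 1 by rewrite -[e]mulr1 ea.
  by rewrite /e; apply: memvZ; apply: memv_line.
have Ew1 : Ew 1%g = <[1]>%VS.
  apply/eqP; rewrite eq_sym eqEdim -memvE one_in Ew_dim dim_vline oner_neq0 //.
move=> neff.
have [y [z [Fz [hzx [u [hu [c [huc cne]]]]]]]] :
  exists y z, F z = y /\ (z * x * y^-1)%g = x /\ exists u, iota u = b y /\
     exists c, u * b x = c *: (b x * b y) /\ c != 1.
  apply: Classical_Prop.NNPP => hn; apply: neff => y z Fz hzx u hu c huc.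
  apply: Classical_Prop.NNPP => hc; apply: hn; exists y, z; split => //; split => //.
  exists u; split => //; exists c; split => //; exact/eqP.
have := mul_in y y^-1%g; rewrite mulgV Ew1 => /vlineP [al hal].
have := mul_in y^-1%g y; rewrite mulVg Ew1 => /vlineP [be hbe].
have al_nz : al != 0 by apply/eqP => l0; move: (mul_nz y y^-1%g); by rewrite hal l0 scale0r eqxx.
have albe : al = be.
  have : (b y * b y^-1%g) * b y = b y * (b y^-1%g * b y) by rewrite mulrA.
  rewrite hal hbe -scalerAl -scalerAr mul1r mulr1 => /eqP.
  by rewrite -subr_eq0 -scalerBl scaler_eq0 (negPf (b_nz y)) orbF subr_eq0 => /eqP.
set T := (iotaV \o act (b x))%VF.
set B := act (b y); set B' := act (b y^-1%g).
have BT : (B \o T = c *: (T \o B))%VF.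
  apply/lfunP => v; rewrite /B /T scale_lfunE !comp_lfunE -{1}hu -iotaV_comm.
  by rewrite -(comp_lfunE (act u) (act (b x)) v) -actM huc linearZ /= scale_lfunE linearZ /= actM comp_lfunE.
have BB' : (B \o B' = al *: \1)%VF by rewrite /B /B' -actM hal linearZ /= act1.
have B'B : (B' \o B = be *: \1)%VF by rewrite /B /B' -actM hbe linearZ /= act1.
have : be * lftr T = c * al * lftr T.
  rewrite -ltrZ.
  have -> : be *: T = (be *: \1 \o T)%VF by rewrite -comp_lfunZl comp_lfun1l.
  rewrite -B'B -comp_lfunA BT.
  rewrite -comp_lfunZr ltrZ ltr_comm -comp_lfunA BB' -comp_lfunZr comp_lfun1r ltrZ.
  by rewrite mulrA.
rewrite -albe => /eqP; rewrite -subr_eq0 -mulrBl mulf_eq0 => /orP [|/eqP //].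
rewrite -[X in X - _]mul1r -mulrBl mulf_eq0 (negPf al_nz) orbF subr_eq0 eq_sym.
by rewrite (negPf cne).
Qed.
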